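(* Let $a\in \mathcal{A}$. Then $a\in \mathcal{A}^{\mathrm{gcEP}}$ if and only if (1) $a\in \mathcal{A}^d$; and (2) there exists a unique projection $q\in \mathcal{A}$ such that $\ell(a^d)=\ell(q)$.
   Context: $\mathcal{A}$ is a complex Banach *-algebra with identity; a projection is $q$ with $q=q^2=q^*$. $\mathcal{A}^d$ is the set of generalized Drazin invertible elements, with $a^d$ the generalized Drazin inverse ($a(a^d)^2=a^d$, $aa^d=a^da$, $a-a^2a^d$ quasinilpotent). $\mathcal{A}^{\mathrm{gcEP}}$ is the set of $a$ for which there is $x\in\mathcal{A}$ with $x=ax^2$, $(ax)^*=ax$, $\lim_{n\to\infty}\|a^n-xa^{n+1}\|^{1/n}=0$ (generalized core-EP invertible elements). $\ell(\cdot)$ denotes the left annihilator. *)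

(* Defs.v *)
From HB Require Import structures.
From mathcomp Require Import all_boot all_order all_algebra.
From mathcomp Require Import all_classical all_reals all_analysis.
From mathcomp Require Import complex.

Set Implicit Arguments.
Unset Strict Implicit.
Unset Printing Implicit Defensive.

Import Order.TTheory GRing.Theory Num.Theory.
Import numFieldNormedType.Exports.
Local Open Scope ring_scope.
Local Open Scope complex_scope.
Local Open Scope classical_set_scope.

(* A : completeNormedModType (complex R) is a complex Banach space.
   The record below equips it with a unital associative bilinear
   multiplication with submultiplicative norm and ||1|| = 1, and an involution
   (conjugate-linear, anti-multiplicative, involutive): a unital complex
   Banach *-algebra.  (The HB hierarchy has no ready-made normed-algebra
   structure and the join of ring and normed-module structures is rejected by
   HB, so the algebra operations are bundled explicitly.) *)
Record BanachStarAlgebra (R : realType) (A : completeNormedModType (complex R)) :=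
  { mul : A -> A -> A;
    one : A;
    star : A -> A;
    mulA : forall x y z, mul x (mul y z) = mul (mul x y) z;
    mul1x : forall x, mul one x = x;
    mulx1 : forall x, mul x one = x;
    mulDl : forall x y z, mul (x + y) z = mul x z + mul y z;
    mulDr : forall x y z, mul x (y + z) = mul x y + mul x z;
    mulZl : forall (k : complex R) x y, mul (k *: x) y = k *: mul x y;
    mulZr : forall (k : complex R) x y, mul x (k *: y) = k *: mul x y;
    normM_le : forall x y, `|mul x y| <= `|x| * `|y|;
    norm_one : `|one| = 1;
    starD : forall x y, star (x + y) = star x + star y;
    starZ : forall (k : complex R) x, star (k *: x) = (k^*)%R *: star x;
    starM : forall x y, star (mul x y) = mul (star y) (star x);
    starK : forall x, star (star x) = x }.

Section Defs.
Variables (R : realType) (A : completeNormedModType (complex R))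
  (B : BanachStarAlgebra A).

Local Notation "x *a y" := (mul B x y) (at level 40, left associativity).

Definition apow (x : A) (n : nat) : A := iter n (mul B x) (one B).

(* The real norm of an element: the norm of a normed C-module is valued in
   C (real and nonnegative); we take its real part. *)
Definition nrm (x : A) : R := complex.Re `|x|.

Definition root_norm_to0 (u : nat -> A) : Prop :=
  (fun n : nat => powR (nrm (u n)) (n%:R^-1)) @ \oo --> (0 : R).

Definition quasinilpotent (x : A) : Prop := root_norm_to0 (apow x).

Definition is_gDrazin_inv (a b : A) : Prop :=
  a *a apow b 2 = b /\ a *a b = b *a a /\ quasinilpotent (a - apow a 2 *a b).

Definition gDrazin_invertible (a : A) : Prop := exists b, is_gDrazin_inv a b.

Definition is_gcEP_inv (a x : A) : Prop :=
  x = a *a apow x 2 /\ star B (a *a x) = a *a x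
  /\ root_norm_to0 (fun n => apow a n - x *a apow a n.+1).

Definition gcEP_invertible (a : A) : Prop := exists x, is_gcEP_inv a x.

Definition projection (q : A) : Prop := q = q *a q /\ q = star B q.

Definition lann (x : A) : set A := [set y | y *a x = 0].

End Defs.

(* Main.v *)
Require Import Defs.
From HB Require Import structures.
From mathcomp Require Import all_boot all_order all_algebra.
From mathcomp Require Import all_classical all_reals all_analysis.
From mathcomp Require Import complex.
From mathcomp Require Import ring lra.

Set Implicit Arguments.
Unset Strict Implicit.
Unset Printing Implicit Defensive.
Import Order.TTheory GRing.Theory Num.Theory.
Import numFieldNormedType.Exports.

Section S.
Local Open Scope ring_scope.
Local Open Scope complex_scope.
Local Open Scope classical_set_scope.
Variables (R : realType) (A : completeNormedModType (complex R)) (B : BanachStarAlgebra A).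

Local Notation nrm := (@nrm R A).

Lemma nrmE (v : A) : `|v| = (nrm v)%:C.
Proof.
have := normr_ge0 v; move/ger0_Im; rewrite /nrm; case: `|v| => re im /= -> //.
Qed.

Lemma nrm_ge0 (v : A) : 0 <= nrm v.
Proof. by have := normr_ge0 v; rewrite nrmE ler0c. Qed.

Lemma nrmD (u v : A) : nrm (u + v) <= nrm u + nrm v.
Proof. by have := ler_normD u v; rewrite !nrmE -rmorphD lecR. Qed.

Lemma nrmM (u v : A) : nrm (Defs.mul B u v) <= nrm u * nrm v.
Proof. by have := normM_le B u v; rewrite !nrmE -rmorphM lecR. Qed.

Lemma nrmN (v : A) : nrm (- v) = nrm v.
Proof. by rewrite /Defs.nrm normrN. Qed.

Lemma nrm0 : nrm 0 = 0.
Proof. by rewrite /Defs.nrm normr0. Qed.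

Lemma nrm_eq0 (v : A) : nrm v = 0 -> v = 0.
Proof. by move=> h; apply/normr0_eq0; rewrite nrmE h. Qed.

Lemma nrm1 : nrm (Defs.one B) = 1.
Proof. by rewrite /Defs.nrm norm_one. Qed.

Lemma rn0P (u : nat -> A) : root_norm_to0 u <->
  forall e : R, 0 < e -> exists N, forall n, (N <= n)%N -> nrm (u n) <= e ^+ n.
Proof.
split.
- move=> /cvgrPdist_le h e e0; have [N _ HN] := h e e0.
  exists N.+1 => n Nn.
  have /= := HN n (leq_trans (leqnSn N) Nn).
  rewrite sub0r normrN ger0_norm ?powR_ge0 // => H.
  have n0 : (0 < n)%N by apply: leq_trans Nn.
  have -> : nrm (u n) = (nrm (u n) `^ n%:R^-1) ^+ n.
    rewrite -powR_mulrn ?powR_ge0 // -powRrM mulVf ?powRr1 ?nrm_ge0 //.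
    by rewrite pnatr_eq0 -lt0n.
  by rewrite lerXn2r // ?nnegrE ?powR_ge0 // ltW.
- move=> h; apply/cvgrPdist_le => e e0; have [N HN] := h e e0.
  exists N.+1 => // n /= Nn.
  have n0 : (0 < n)%N by apply: leq_trans Nn.
  rewrite sub0r normrN ger0_norm ?powR_ge0 //.
  have -> : e = (e ^+ n) `^ n%:R^-1.
    rewrite -powR_mulrn ?(ltW e0) // -powRrM mulfV ?powRr1 ?(ltW e0) //.
    by rewrite pnatr_eq0 -lt0n.
  apply: ge0_ler_powR; rewrite ?nnegrE ?invr_ge0 ?ler0n ?nrm_ge0 ?exprn_ge0 ?(ltW e0) //.
  by apply: HN; apply: leq_trans Nn.
Qed.


Lemma rn_geo (r : nat -> A) (M : R) : root_norm_to0 r -> 0 <= M ->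
  forall c, 0 < c -> exists N, forall n, (N <= n)%N -> nrm (r n) * M ^+ n <= c ^+ n.
Proof.
move=> /rn0P h M0 c c0.
have M1 : 0 < M + 1 by rewrite ltr_wpDl.
have e0 : 0 < c / (M + 1) by rewrite divr_gt0.
have [N HN] := h _ e0; exists N => n Nn.
apply: le_trans (ler_wpM2r (exprn_ge0 n M0) (HN n Nn)) _.
rewrite -exprMn; apply: lerXn2r; rewrite ?nnegrE ?mulr_ge0 ?(ltW e0) ?(ltW c0) //.
by rewrite invr_ge0 ltW.
rewrite mulrAC ler_pdivrMr // ler_pM2l // lerDl ler01 //.
Qed.

Lemma rn_geo0 (r : nat -> A) (M : R) : root_norm_to0 r -> 0 <= M ->
  forall e, 0 < e -> exists N, forall n, (N <= n)%N -> nrm (r n) * M ^+ n <= e.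
Proof.
move=> h M0 e e0.
pose c := Num.min e 1.
have c0 : 0 < c by rewrite lt_min e0 ltr01.
have [N HN] := rn_geo h M0 c0; exists N.+1 => n Nn.
apply: le_trans (HN n (leq_trans (leqnSn N) Nn)) _.
apply: (@le_trans _ _ (c ^+ 1)).
  apply: ler_wiXn2l; rewrite ?(ltW c0) ?ge_min ?lexx ?orbT //.
  by apply: leq_trans Nn.
by rewrite expr1 ge_min lexx.
Qed.

Lemma nrm_zero_lim (c : A) (d : nat -> R) (K L : R) (N0 : nat) :
  (forall e, 0 < e -> exists N, forall n, (N <= n)%N -> d n <= e) ->
  (forall n, (N0 <= n)%N -> 0 <= d n /\ nrm c <= K * d n + L * (d n * d n)) ->
  0 <= K -> 0 <= L -> c = 0.
Proof.
move=> hd hc K0 L0; apply: nrm_eq0; apply/eqP; rewrite eq_le nrm_ge0 andbT.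
apply/unstable.ler_gtP => z z0.
have KL : 0 < K + L + 1 by rewrite ltr_wpDl // addr_ge0.
pose del := Num.min 1 (z / (K + L + 1)).
have del0 : 0 < del by rewrite lt_min ltr01 divr_gt0.
have [N HN] := hd del del0.
have [dn0 hcn] := hc (maxn N N0) (leq_maxr N N0).
have dn := HN (maxn N N0) (leq_maxl N N0).
set t := d (maxn N N0) in dn0 hcn dn.
have d1 : del <= 1 by rewrite ge_min lexx.
have d2 : del * (K + L + 1) <= z.
  by rewrite -ler_pdivlMr // ge_min lexx orbT.
have t1 : K * t <= K * del by rewrite ler_wpM2l.
have t2 : L * (t * t) <= L * del.
  rewrite ler_wpM2l //; apply: (@le_trans _ _ (del * 1)); last by rewrite mulr1.
  apply: ler_pM => //; apply: le_trans d1; exact: dn.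
have t3 : 0 <= del by apply: ltW.
apply: le_trans hcn _.
have : K * del + L * del <= z.
  apply: (le_trans _ d2); rewrite !mulrDr mulr1 [del * K]mulrC [del * L]mulrC lerDl; exact: t3.
move=> h3; apply: le_trans h3; rewrite lerD //.
Qed.

Lemma rn_shift (r v : nat -> A) (K : R) : root_norm_to0 r -> 0 <= K ->
  (forall m, nrm (v m.+1) <= K * nrm (r m)) -> root_norm_to0 v.
Proof.
move=> /rn0P hr K0 hv; apply/rn0P => d d0.
pose c := Num.min d 1.
have c0 : 0 < c by rewrite lt_min d0 ltr01.
have c1 : c <= 1 by rewrite ge_min lexx orbT.
have cd : c <= d by rewrite ge_min lexx.
have K1 : 0 < K + 1 by rewrite ltr_wpDl.
pose eps := c ^+ 2 / (K + 1).
have eps0 : 0 < eps by rewrite divr_gt0 ?exprn_gt0.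
have epsc : eps <= c.
  rewrite ler_pdivrMr // expr2; apply: ler_pM; rewrite ?(ltW c0) //.
  by apply: le_trans c1 _; rewrite -subr_ge0 addrK.
have [N HN] := hr eps eps0; exists N.+2 => -[|[|k]] // Nk.
have Nk' : (N <= k.+1)%N by rewrite !ltnS in Nk; apply: leq_trans Nk (leqnSn k).
apply: le_trans (hv k.+1) _.
apply: le_trans (ler_wpM2l K0 (HN _ Nk')) _.
apply: (@le_trans _ _ ((K + 1) * eps ^+ k.+1)).
  by rewrite ler_wpM2r ?exprn_ge0 ?(ltW eps0) // lerDl.
rewrite exprS mulrA /eps mulrCA mulfV ?gt_eqF // mulr1.
apply: (@le_trans _ _ (c ^+ k.+2)); last first.
  by apply: lerXn2r; rewrite ?nnegrE ?(ltW c0) ?(ltW d0).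
rewrite -[k.+2]/(2 + k)%N exprD ler_wpM2l ?exprn_ge0 ?(ltW c0) //.
by apply: lerXn2r; rewrite ?nnegrE ?(ltW c0) ?(ltW eps0).
Qed.

End S.

Section Alg.
Local Open Scope ring_scope.
Local Open Scope complex_scope.
Local Open Scope classical_set_scope.
Variables (R : realType) (A : completeNormedModType (complex R)) (B : BanachStarAlgebra A).
Definition TT : Type := A.
HB.instance Definition _ := GRing.Zmodule.on TT.
HB.instance Definition _ := GRing.Zmodule_isPzRing.Build TT
  (Defs.mulA B) (Defs.mul1x B) (Defs.mulx1 B) (Defs.mulDl B) (Defs.mulDr B).

Local Notation nrm := (@Defs.nrm R A).

Lemma apowE (x : TT) n : apow B x n = x ^+ n.
Proof. by elim: n => [|n IH] //=; rewrite exprS -IH. Qed.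

Lemma nrmMT (u v : TT) : nrm (u * v) <= nrm u * nrm v.
Proof. exact: nrmM. Qed.

Lemma nrmX (u : TT) n : nrm (u ^+ n) <= nrm u ^+ n.
Proof.
elim: n => [|n IH]; first by rewrite !expr0 nrm1.
rewrite !exprS; apply: le_trans (nrmMT _ _) _.
by rewrite ler_wpM2l ?nrm_ge0.
Qed.

Section Fwd.
Variables (a x : TT).
Hypothesis hx : x = a * (x * x).
Hypothesis hr : root_norm_to0 (fun n => (a ^+ n - x * a ^+ n.+1 : TT)).

Let r n : TT := a ^+ n - x * a ^+ n.+1.

Lemma A1 k : a * x ^+ k.+2 = x ^+ k.+1.
Proof. by rewrite !exprS !mulrA -(mulrA a) -hx. Qed.

Lemma A2 n : a ^+ n * x ^+ n.+1 = x.
Proof.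
elim: n => [|n IH]; first by rewrite mul1r expr1.
by rewrite exprSr -mulrA A1.
Qed.

Lemma A3 n : a ^+ n.+1 * x ^+ n.+1 = a * x.
Proof. by rewrite exprS -mulrA A2. Qed.

Lemma killZ (c u w : TT) :
  (forall m, (0 < m)%N -> c = u * r m * x ^+ m * w) -> c = 0.
Proof.
move=> hc.
have [M0 Mg] : 0 <= nrm x /\ True by split => //; exact: nrm_ge0.
apply: (@nrm_zero_lim R A c (fun m => nrm (r m) * nrm x ^+ m) (nrm u * nrm w) 0 1).
- exact: rn_geo0.
- move=> n n0; split; first by rewrite mulr_ge0 ?exprn_ge0 ?nrm_ge0.
  rewrite mul0r addr0 (hc n n0).
  apply: le_trans (nrmMT _ _) _.
  rewrite mulrAC ler_wpM2r ?nrm_ge0 //.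
  apply: le_trans (nrmMT _ _) _; rewrite mulrA.
  apply: ler_pM; rewrite ?nrm_ge0 ?nrmX //.
  exact: nrmMT.
- by rewrite mulr_ge0 ?nrm_ge0.
- by [].
Qed.


Lemma rx m : r m * x ^+ m.+1 = x - x * (a * x).
Proof. by rewrite /r mulrBl A2 -mulrA A3. Qed.

Lemma L1 : x * a * x = x.
Proof.
apply/eqP; rewrite -subr_eq0; apply/eqP; apply: (@killZ _ (-1) x) => m _.
by rewrite mulN1r -(mulrA _ (x ^+ m)) -exprSr mulNr rx opprB mulrA.
Qed.

Lemma arx k : a * r k.+1 * x ^+ k.+1 = a * (a * x) - a * x * (a * (a * x)).
Proof.
rewrite /r -mulrA mulrBl A3 -(mulrA x (a ^+ k.+2)) [a ^+ k.+2]exprS -(mulrA a) A3 mulrBr !mulrA.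
by [].
Qed.

Lemma L2 : a * (a * x) = a * x * (a * (a * x)).
Proof.
apply/eqP; rewrite -subr_eq0; apply/eqP; apply: (@killZ _ a 1) => -[|k] // _.
by rewrite mulr1 arx.
Qed.

Lemma rx1 k : r k.+1 * x ^+ k.+1 = a * x - x * a * (a * x).
Proof.
rewrite /r mulrBl A3 -(mulrA x (a ^+ k.+2)) [a ^+ k.+2]exprS -(mulrA a) A3 !mulrA.
by [].
Qed.

Lemma L3 : x * a * (a * x) = a * x.
Proof.
apply/eqP; rewrite -subr_eq0 -oppr_eq0 opprB; apply/eqP.
apply: (@killZ _ 1 1) => -[|k] // _.
by rewrite mulr1 mul1r rx1.
Qed.

Variable p : TT.
Hypothesis hp : p = a * x.

Lemma pp : p * p = p.
Proof. by rewrite hp -mulrA (mulrA x) L1. Qed.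

Lemma px : p * x = x.
Proof. by rewrite hp -mulrA -hx. Qed.

Lemma xp : x * p = x.
Proof. by rewrite hp mulrA L1. Qed.

Lemma Lap : a * p = p * a * p.
Proof. by rewrite hp L2 !mulrA. Qed.

Lemma Y n : a ^+ n * p = p * a ^+ n * p.
Proof.
elim: n => [|n IH]; first by rewrite !expr0 mul1r mulr1 pp.
have e : a ^+ n.+1 * p = a * (a ^+ n * p) by rewrite exprS mulrA.
have f : p * a ^+ n.+1 * p = p * a * (a ^+ n * p) by rewrite exprS !mulrA.
by rewrite e f IH !mulrA Lap.
Qed.

Lemma xap : x * a * p = p.
Proof. by rewrite hp L3. Qed.

Lemma xapL y : x * a * (p * y) = p * y.
Proof. by rewrite mulrA xap. Qed.

Lemma xkp k : x ^+ k.+1 * p = x ^+ k.+1.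
Proof. by rewrite exprSr -mulrA xp. Qed.

Lemma C' k : x ^+ k.+1 * a ^+ k.+1 * p = p.
Proof.
elim: k => [|k IH]; first by rewrite !expr1 xap.
have e1 : x ^+ k.+2 * a ^+ k.+2 * p = x ^+ k.+1 * (x * a * (a ^+ k.+1 * p)).
  by rewrite [x ^+ k.+2]exprSr [a ^+ k.+2]exprS !mulrA.
by rewrite e1 Y -(mulrA p) xapL mulrA xkp mulrA IH.
Qed.

Lemma C k : x ^+ k.+1 * a ^+ k.+1 * x = x.
Proof. by have h := congr1 (fun y => y * x) (C' k); rewrite /= -mulrA px in h. Qed.

Definition X n : TT := x ^+ n.+1 * a ^+ n.

Lemma XX n : X n * a * X n = X n.
Proof.
have -> : X n * a * X n = (x ^+ n.+1 * a ^+ n.+1 * x) * (x ^+ n * a ^+ n).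
  by rewrite /X [x ^+ n.+1]exprS [a ^+ n.+1]exprSr !mulrA.
by rewrite C mulrA -exprS.
Qed.

Lemma XA n : a * X n.+1 = X n * a.
Proof. by rewrite /X mulrA A1 [a ^+ n.+1]exprSr mulrA. Qed.

Lemma Xp n : X n * p = x.
Proof.
case: n => [|n]; first by rewrite /X expr0 mulr1 expr1 xp.
rewrite /X (_ : x ^+ n.+2 * _ * p = x * (x ^+ n.+1 * a ^+ n.+1 * p)); first by rewrite C' xp.
by rewrite [x ^+ n.+2]exprS !mulrA.
Qed.

Lemma pX n : p * X n = X n.
Proof. by rewrite /X mulrA exprS mulrA px. Qed.

Lemma Xdiff n : X n.+1 - X n = - (x ^+ n.+1 * r n).
Proof.
rewrite /X /r mulrBr opprB [x ^+ n.+2]exprSr -mulrA mulrA.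
by [].
Qed.

Lemma Xstep n : nrm (X n.+1 - X n) <= nrm x * (nrm (r n) * nrm x ^+ n).
Proof.
rewrite Xdiff nrmN; apply: le_trans (nrmMT _ _) _.
apply: le_trans (ler_wpM2r (nrm_ge0 _) (nrmX _ _)) _.
by rewrite exprS -mulrA [nrm x ^+ n * _]mulrC.
Qed.

Lemma Xgeo c : 0 < c -> c <= 2^-1 -> exists N, forall n j, (N <= n)%N ->
  nrm (X (n + j) - X n) <= 2 * nrm x * c ^+ n - 2 * nrm x * c ^+ (n + j).
Proof.
move=> c0 c2.
have [N HN] := rn_geo hr (nrm_ge0 x) c0.
exists N => n j Nn; elim: j => [|j IH].
  by rewrite addn0 subrr nrm0 subrr.
have -> : X (n + j.+1) - X n = (X (n + j).+1 - X (n + j)) + (X (n + j) - X n).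
  by rewrite addnS addrA subrK.
apply: le_trans (nrmD _ _) _.
have h1 := Xstep (n + j).
have h2 : nrm (r (n + j)) * nrm x ^+ (n + j) <= c ^+ (n + j).
  by apply: HN; apply: leq_trans Nn (leq_addr _ _).
have h3 : nrm x * (nrm (r (n + j)) * nrm x ^+ (n + j)) <= nrm x * c ^+ (n + j).
  by rewrite ler_wpM2l ?nrm_ge0.
rewrite addnS exprS.
have t0 : 0 <= nrm x * c ^+ (n + j) by rewrite mulr_ge0 ?nrm_ge0 ?exprn_ge0 ?ltW.
set t := nrm x * c ^+ (n + j) in h3 t0.
have -> : 2 * nrm x * (c * c ^+ (n + j)) = 2 * c * t by rewrite /t; ring.
have e2 : 2 * nrm x * c ^+ (n + j) = 2 * t by rewrite /t; ring.
rewrite e2 in IH.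
set u := 2 * nrm x * c ^+ n in IH *.
have : 2 * c * t <= t.
  rewrite -[leRHS]mul1r ler_wpM2r //.
  by rewrite -ler_pdivlMl ?ltr0n // mulr1.
move: IH h1 h3; set v1 := nrm (X (n + j) - X n); set v2 := nrm _.
move=> IH h1 h3 h4; lra.
Qed.

Definition Xa (n : nat) : A := X n.

Lemma Xlim : exists b : TT, forall e, 0 < e ->
  exists N, forall n, (N <= n)%N -> nrm (b - X n) <= e.
Proof.
have : cvg (Xa @ \oo).
  suff : cauchy (Xa @ \oo) by exact: cauchy_cvg.
  suff : cauchy_ex (Xa @ \oo) by exact: cauchy_exP.
  move=> eps eps0; rewrite /fmapE -ball_normE /ball_.
  move: eps0; rewrite ltcE => /andP[/eqP Ie Re0].
  have ee : eps = (complex.Re eps)%:C by case: eps Ie {Re0} => ? ? /= ->.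
  set e := complex.Re eps in Re0 ee.
  pose c := Num.min (2^-1) (e / (4 * nrm x + 4)).
  have K0 : 0 < 4 * nrm x + 4 by rewrite ltr_wpDl ?mulr_ge0 ?nrm_ge0.
  have c0 : 0 < c by rewrite lt_min invr_gt0 ltr0n divr_gt0.
  have c2 : c <= 2^-1 by rewrite ge_min lexx.
  have ce : c * (4 * nrm x + 4) <= e by rewrite -ler_pdivlMr // ge_min lexx orbT.
  have [N HN] := Xgeo c0 c2.
  exists (Xa N.+1), N.+1 => // m Nm.
  rewrite /= ee nrmE ltcR.
  have [j ->] : exists j, m = (N.+1 + j)%N by exists (m - N.+1)%N; rewrite subnKC.
  rewrite /Xa -nrmN opprB.
  apply: le_lt_trans (HN _ j (leqnSn N)) _.
  have cn : c ^+ N.+1 <= c.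
    rewrite -[leRHS]expr1; apply: ler_wiXn2l => //; first exact: ltW.
    by apply: le_trans c2 _; rewrite invf_le1 ?ler1n ?ltr0n.
  have cj : 0 <= c ^+ (N.+1 + j) by rewrite exprn_ge0 ?ltW.
  have nx := nrm_ge0 x.
  have : nrm x * c ^+ N.+1 <= nrm x * c by rewrite ler_wpM2l.
  have : 0 <= nrm x * c ^+ (N.+1 + j) by rewrite mulr_ge0.
  set s1 := nrm x * c ^+ N.+1; set s2 := nrm x * c ^+ (N.+1 + j).
  have -> : 2 * nrm x * c ^+ N.+1 = 2 * s1 by rewrite /s1; ring.
  have -> : 2 * nrm x * c ^+ (N.+1 + j) = 2 * s2 by rewrite /s2; ring.
  move=> h1 h2; nra.
rewrite cvg_ex /= => -[l Hl]; exists l => e e0.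
move/cvgrPdist_le: Hl => /(_ e%:C); rewrite ltcR => /(_ e0) [N _ HN].
exists N => n Nn; have := HN n Nn; rewrite nrmE lecR /Xa.
by [].
Qed.

Variable b : TT.
Hypothesis hb : forall e, 0 < e -> exists N, forall n, (N <= n)%N -> nrm (b - X n) <= e.

Lemma hb2 e : 0 < e -> exists N, forall n, (N <= n)%N ->
  nrm (b - X n) + nrm (b - X n.+1) <= e.
Proof.
move=> e0; have e2 : 0 < e / 2 by rewrite divr_gt0.
have [N HN] := hb e2.
exists N => n Nn; have h1 := HN n Nn; have h2 := HN n.+1 (leq_trans Nn (leqnSn n)).
lra.
Qed.

Lemma nrmMr (u v : TT) : nrm (u * v) <= nrm u * nrm v.
Proof. exact: nrmMT. Qed.

Lemma Bab : a * b = b * a.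
Proof.
apply/eqP; rewrite -subr_eq0; apply/eqP.
apply: (@nrm_zero_lim R A _ (fun n => nrm (b - X n) + nrm (b - X n.+1)) (nrm a) 0 0).
- exact: hb2.
- move=> n _; split; first by rewrite addr_ge0 ?nrm_ge0.
  have -> : a * b - b * a = a * (b - X n.+1) + (- ((b - X n) * a)).
    by rewrite mulrBr mulrBl XA opprB addrA subrK.
  apply: le_trans (nrmD _ _) _; rewrite nrmN mul0r addr0.
  have h1 := nrmMr a (b - X n.+1); have h2 := nrmMr (b - X n) a.
  have := nrm_ge0 a; have := nrm_ge0 (b - X n); have := nrm_ge0 (b - X n.+1).
  move: h1 h2; set u1 := nrm (b - X n); set u2 := nrm (b - X n.+1); set na := nrm a.
  move=> *; nra.
- exact: nrm_ge0.
- by [].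
Qed.

Lemma Bbab : b * a * b = b.
Proof.
apply/eqP; rewrite -subr_eq0; apply/eqP.
apply: (@nrm_zero_lim R A _ (fun n => nrm (b - X n)) (2 * nrm a * nrm b + 1) (nrm a) 0 hb).
- move=> n _; split; first exact: nrm_ge0.
  have -> : b * a * b - b = (b - X n) * a * b + X n * a * (b - X n) + (- (b - X n)).
    rewrite !mulrBl !mulrBr XX; rewrite -!addrA; congr (_ + _).
    by rewrite addKr opprB addKr.
  have h1 : nrm ((b - X n) * a * b) <= nrm (b - X n) * nrm a * nrm b.
    apply: le_trans (nrmMr _ _) _; rewrite ler_wpM2r ?nrm_ge0 //; exact: nrmMr.
  have h2 : nrm (X n * a * (b - X n)) <= nrm (X n) * nrm a * nrm (b - X n).
    apply: le_trans (nrmMr _ _) _; rewrite ler_wpM2r ?nrm_ge0 //; exact: nrmMr.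
  have h3 : nrm (X n) <= nrm b + nrm (b - X n).
    have e1 : X n = b + (- (b - X n)) by rewrite opprB addrC subrK.
    by rewrite {1}e1; apply: le_trans (nrmD _ _) _; rewrite nrmN.
  apply: le_trans (nrmD _ _) _; rewrite nrmN.
  apply: le_trans (lerD (nrmD _ _) (lexx _)) _.
  have := nrm_ge0 a; have := nrm_ge0 b; have := nrm_ge0 (b - X n); have := nrm_ge0 (X n).
  move: h1 h2 h3; set D := nrm (b - X n); set na := nrm a; set nb := nrm b; set nX := nrm (X n).
  move=> h1 h2 h3 g1 g2 g3 g4.
  have h4 : nX * na * D <= (nb + D) * na * D.
    by rewrite ler_wpM2r // ler_wpM2r.
  nra.
- by rewrite addr_ge0 ?mulr_ge0 ?nrm_ge0.
- exact: nrm_ge0.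
Qed.

Lemma Bbp : b * p = x.
Proof.
apply/eqP; rewrite -subr_eq0; apply/eqP.
apply: (@nrm_zero_lim R A _ (fun n => nrm (b - X n)) (nrm p) 0 0 hb).
- move=> n _; split; first exact: nrm_ge0.
  have -> : b * p - x = (b - X n) * p by rewrite mulrBl Xp.
  rewrite mul0r addr0 mulrC; exact: nrmMr.
- exact: nrm_ge0.
- by [].
Qed.

Lemma Bpb : p * b = b.
Proof.
apply/eqP; rewrite -subr_eq0; apply/eqP.
apply: (@nrm_zero_lim R A _ (fun n => nrm (b - X n)) (nrm p + 1) 0 0 hb).
- move=> n _; split; first exact: nrm_ge0.
  have -> : p * b - b = p * (b - X n) + (- (b - X n)).
    by rewrite mulrBr pX opprB addrA subrK.
  apply: le_trans (nrmD _ _) _; rewrite nrmN mul0r addr0 mulrDl mul1r.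
  by rewrite lerD2r nrmMr.
- by rewrite addr_ge0 ?ler01 ?nrm_ge0.
- by [].
Qed.

Lemma ab2 : a * (b * b) = b.
Proof. by rewrite mulrA Bab Bbab. Qed.

Lemma Wpow m : (a - a * a * b) ^+ m.+1 = (1 - a * b) * (a * r m).
Proof.
have w1 : a - a * a * b = (1 - a * b) * a.
  by rewrite mulrBl mul1r -(mulrA a b a) -Bab mulrA.
have ca : a * (1 - a * b) = (1 - a * b) * a.
  by rewrite mulrBr mulrBl mulr1 mul1r -(mulrA a b a) -Bab mulrA.
have ee : (1 - a * b) * (1 - a * b) = 1 - a * b.
  rewrite mulrBr mulr1 mulrBl mul1r -(mulrA a b) (mulrA b a b) Bbab.
  by rewrite subrr subr0.
have hw : forall k, (a - a * a * b) ^+ k.+1 = (1 - a * b) * a ^+ k.+1.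
  elim=> [|k IH]; first by rewrite !expr1 w1.
  rewrite exprS IH w1 -mulrA (mulrA a) ca -!mulrA (mulrA (1 - a * b)) ee.
  by rewrite -exprS.
have ar : a * r m = a ^+ m.+1 - p * a ^+ m.+1 by rewrite /r mulrBr -exprS mulrA -hp.
have ep0 : (1 - a * b) * p = 0 by rewrite mulrBl mul1r -mulrA Bbp -hp subrr.
by rewrite hw ar mulrBr mulrA ep0 mul0r subr0.
Qed.

Lemma Wq : root_norm_to0 (fun n => (a - a * a * b) ^+ n : TT).
Proof.
refine (@rn_shift R A r _ (nrm (1 - a * b) * nrm a) hr _ _).
  by rewrite mulr_ge0 ?nrm_ge0.
move=> m; rewrite Wpow; apply: le_trans (nrmMr _ _) _.
by rewrite -mulrA ler_wpM2l ?nrm_ge0 ?nrmMr.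
Qed.

Lemma lannE (y : TT) : y * b = 0 <-> y * p = 0.
Proof.
split=> h.
  by rewrite -xap -Bbp !mulrA h !mul0r.
by rewrite -Bpb mulrA h mul0r.
Qed.


End Fwd.

Section Bwd.
Variables (a b q : TT).
Hypothesis h1 : a * (b * b) = b.
Hypothesis h2 : a * b = b * a.
Hypothesis h3 : root_norm_to0 (fun n => (a - a * a * b) ^+ n : TT).
Hypothesis hq1 : q = q * q.
Hypothesis hl : forall y : TT, y * b = 0 <-> y * q = 0.

Lemma bab : b * a * b = b.
Proof. by rewrite -h2 -mulrA h1. Qed.

Lemma qb : q * b = b.
Proof.
have : (1 - q) * q = 0 by rewrite mulrBl mul1r -hq1 subrr.
move/hl; rewrite mulrBl mul1r => /eqP; rewrite subr_eq0 => /eqP.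
by move=> e; first [exact e | exact (esym e)].
Qed.

Lemma eq' : a * b * q = q.
Proof.
have : (1 - a * b) * b = 0 by rewrite mulrBl mul1r -mulrA h1 subrr.
move/hl; rewrite mulrBl mul1r => /eqP; rewrite subr_eq0 => /eqP.
by move=> e; first [exact e | exact (esym e)].
Qed.

Lemma qe : q * (a * b) = a * b.
Proof.
have : (1 - q) * q = 0 by rewrite mulrBl mul1r -hq1 subrr.
move/hl => h.
have : (1 - q) * (a * b) = 0 by rewrite h2 mulrA h mul0r.
rewrite mulrBl mul1r => /eqP; rewrite subr_eq0 => /eqP.
by move=> e; first [exact e | exact (esym e)].
Qed.

Lemma gx1 : b * q = a * ((b * q) * (b * q)).
Proof.
have -> : b * q * (b * q) = b * b * q by rewrite -mulrA (mulrA q) qb mulrA.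
by rewrite mulrA h1.
Qed.

Lemma gx2 : a * (b * q) = q.
Proof. by rewrite mulrA eq'. Qed.

Lemma gvid n : a ^+ n - b * q * a ^+ n.+1 = (1 - b * q * a) * ((1 - a * b) * a ^+ n).
Proof.
have ea : a * b * a = a * (a * b) by rewrite -mulrA -h2.
have be : b * (a * b) = b by rewrite mulrA bab.
have k1 : b * q * a * (1 - a * b) = b * q * a - b * a.
  have k0 : b * q * a * (a * b) = b * a.
    have -> : b * q * a * (a * b) = b * (q * (a * b)) * a.
      by rewrite -(mulrA _ a) -ea !mulrA.
    by rewrite qe be.
  by rewrite mulrBr mulr1 k0.
have k2 : (1 - a * b) * a ^+ n = a ^+ n - b * a ^+ n.+1.
  by rewrite mulrBl mul1r h2 -mulrA -exprS.
rewrite mulrBl mul1r mulrA k1 k2 mulrBl -!mulrA -!exprS opprB.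
by rewrite addrA subrK.
Qed.

Lemma gx3 : root_norm_to0 (fun n => a ^+ n - b * q * a ^+ n.+1 : TT).
Proof.
set w := a - a * a * b.
have hw : forall k, w ^+ k.+1 = (1 - a * b) * a ^+ k.+1.
  have w1 : w = (1 - a * b) * a by rewrite /w mulrBl mul1r -(mulrA a b a) -h2 mulrA.
  have ca : a * (1 - a * b) = (1 - a * b) * a.
    by rewrite mulrBr mulrBl mulr1 mul1r -(mulrA a b a) -h2 mulrA.
  have ee : (1 - a * b) * (1 - a * b) = 1 - a * b.
    rewrite mulrBr mulr1 mulrBl mul1r -(mulrA a b) (mulrA b a b) bab.
    by rewrite subrr subr0.
  elim=> [|k IH]; first by rewrite !expr1 w1.
  rewrite exprS IH w1 -mulrA (mulrA a) ca -!mulrA (mulrA (1 - a * b)) ee.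
  by rewrite -exprS.
refine (@rn_shift R A (fun n => w ^+ n) _ (nrm (1 - b * q * a) * nrm w) h3 _ _).
  by rewrite mulr_ge0 ?nrm_ge0.
move=> m /=; rewrite gvid -hw exprS; apply: le_trans (nrmMT _ _) _.
rewrite -[in leRHS]mulrA ler_wpM2l ?nrm_ge0 //; exact: nrmMT.
Qed.

End Bwd.

Lemma proj_uniq (q1 q2 : TT) : q1 = q1 * q1 -> q1 = Defs.star B q1 ->
  q2 = q2 * q2 -> q2 = Defs.star B q2 ->
  (forall y : TT, y * q1 = 0 <-> y * q2 = 0) -> q1 = q2.
Proof.
move=> e1 s1 e2 s2 hl.
have a1 : q2 = q1 * q2.
  have : (1 - q1) * q1 = 0 by rewrite mulrBl mul1r -e1 subrr.
  move/hl; rewrite mulrBl mul1r => /eqP; rewrite subr_eq0 => /eqP.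
  by move=> e; first [exact e | exact (esym e)].
have a2 : q1 = q2 * q1.
  have : (1 - q2) * q2 = 0 by rewrite mulrBl mul1r -e2 subrr.
  move/hl; rewrite mulrBl mul1r => /eqP; rewrite subr_eq0 => /eqP.
  by move=> e; first [exact e | exact (esym e)].
rewrite s2 a1; have -> : (Defs.star B (q1 * q2) : TT) = (Defs.star B q2 : TT) * (Defs.star B q1 : TT).
  exact: Defs.starM.
by rewrite -s1 -s2 -a2.
Qed.

Lemma lannP (u v : TT) : lann B u = lann B v <-> (forall y : TT, y * u = 0 <-> y * v = 0).
Proof.
split.
  move=> h y; have := congr1 (fun S => S y) h; rewrite /lann /= => ->; by [].
move=> h; apply/seteqP; split => y /= /h //.
Qed.




Lemma main (a : A) : gcEP_invertible B a <->
  (gDrazin_invertible B a /\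
   exists b : A, is_gDrazin_inv B a b /\
     exists! q : A, projection B q /\ lann B b = lann B q).
Proof.
split.
- move=> [x [hx [hs hr]]].
  have hx' : (x : TT) = (a : TT) * ((x : TT) * (x : TT)).
    by rewrite {1}hx apowE expr2.
  have hr' : root_norm_to0 (fun n => (a : TT) ^+ n - (x : TT) * (a : TT) ^+ n.+1 : TT).
    have <- : (fun n => apow B a n - Defs.mul B x (apow B a n.+1)) =
      (fun n => (a : TT) ^+ n - (x : TT) * (a : TT) ^+ n.+1 : TT).
      by apply: funext => n; rewrite !apowE.
    exact: hr.
  have [b hb] := Xlim hr'.
  have hp : (a : TT) * (x : TT) = (a : TT) * (x : TT) by [].
  have hG : is_gDrazin_inv B a b.
    split; first by rewrite apowE expr2; exact: (ab2 hx' hr' hp hb).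
    split; first exact: (Bab hx' hb).
    rewrite /quasinilpotent.
    have -> : apow B (a - Defs.mul B (apow B a 2) b) = (fun n => ((a : TT) - (a : TT) * (a : TT) * (b : TT)) ^+ n : TT).
      by apply: funext => n; rewrite !apowE expr2.
    exact: (Wq hx' hr' hp hb).
  split; first by exists b.
  exists b; split => //.
  exists ((a : TT) * (x : TT)); split.
    split; first by split; [exact: (esym (pp hx' hr' hp)) | exact: (esym hs)].
    by apply/lannP => y; apply: (lannE hx' hr' hp hb).
  move=> q' [[hq1 hq2] hl].
  apply: (proj_uniq (esym (pp hx' hr' hp)) (esym hs) hq1 hq2).
  have hE := lannE hx' hr' hp hb; move/lannP: hl => hl y.
  by split => h; [apply/hl; apply/hE | apply/hE; apply/hl].
- move=> [_ [b [[h1 [h2 h3]] [q [[[hq1 hq2] hl] _]]]]].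
  have h1' : (a : TT) * ((b : TT) * (b : TT)) = b by rewrite -[RHS]h1 apowE expr2.
  have h3' : root_norm_to0 (fun n => ((a : TT) - (a : TT) * (a : TT) * (b : TT)) ^+ n : TT).
    have <- : apow B (a - Defs.mul B (apow B a 2) b) = (fun n => ((a : TT) - (a : TT) * (a : TT) * (b : TT)) ^+ n : TT).
      by apply: funext => n; rewrite !apowE expr2.
    exact: h3.
  move/lannP: hl => hl.
  exists ((b : TT) * (q : TT)); split.
    by rewrite apowE expr2; exact: (gx1 h1' hq1 hl).
  split.
    change (Defs.star B ((a : TT) * ((b : TT) * (q : TT))) = (a : TT) * ((b : TT) * (q : TT))).
    by rewrite (gx2 h1' hl) -hq2.
  have <- : (fun n => (a : TT) ^+ n - (b : TT) * (q : TT) * (a : TT) ^+ n.+1 : TT) =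
      (fun n => apow B a n - Defs.mul B (Defs.mul B b q) (apow B a n.+1)).
    by apply: funext => n; rewrite !apowE.
  exact: (gx3 h1' h2 h3' hq1 hl).
Qed.

End Alg.

Unset Implicit Arguments.
Local Open Scope ring_scope.

Theorem corollary2p4 (R : realType) (A : completeNormedModType (complex R))
    (B : BanachStarAlgebra A) (a : A) :
  gcEP_invertible B a <->
  (gDrazin_invertible B a /\
   exists b : A, is_gDrazin_inv B a b /\
     exists! q : A, projection B q /\ lann B b = lann B q).
Proof. exact: (main B a). Qed.
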